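(* Let $A=\{a_1,\dots,a_s\}$ and $B=\{b_1,\dots,b_t\}$ with costs $\delta(a_i,b_j)$, demands/capacities $\alpha_i\le\alpha'_i$ and $\beta_j\le\beta'_j\le s$, with $\sum_{i=1}^s\alpha'_i>\sum_{j=1}^t\beta_j$. Let $G$ be the weighted bipartite graph constructed as in the context, let $M$ be a minimum weight perfect matching in $G$, and let $L$ be a minimum-cost MMDC between $A$ and $B$. Then $c(L)\le Weight(Main(M))$.
   Context: A many-to-many matching with demands and capacities (MMDC) between $A$ and $B$ is a set $L\subseteq A\times B$ of pairs such that each $a_i$ occurs in at least $\alpha_i$ and at most $\alpha'_i$ pairs of $L$, and each $b_j$ occurs in at least $\beta_j$ and at most $\beta'_j$ pairs of $L$. Its cost is $c(L)=\sum_{(a_i,b_j)\in L}\delta(a_i,b_j)$; a minimum-cost MMDC is one of least cost. Construction of $G=(S\cup T,E)$. Let $\gamma=\max_{i,j}\delta(a_i,b_j)$ and fix numbers $\gamma',\gamma''$ with $\gamma<\gamma'<\gamma''$. The side $S$ consists of pairwise disjoint sets: for each $1\le i\le s$, $A_i=\{a_{i1},\dots,a_{i\alpha_i}\}$ and $A'_i=\{a'_{i1},\dots,a'_{i(\alpha'_i-\alpha_i)}\}$; for each $1\le j\le t$, $X_j=\{x_{j1},\dots,x_{j(\beta'_j-\beta_j)}\}$ and $W_j=\{w_{j1},\dots,w_{j(s-\beta'_j)}\}$. The side $T$ consists of the vertices $b_{ji}$ ($1\le i\le s$, $1\le j\le t$) together with a set $Y$ of $\sum_i\alpha'_i-\sum_j\beta_j$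 vertices. Write $Bset_i=\{b_{1i},\dots,b_{ti}\}$ and $B_j=\{b_{j1},\dots,b_{js}\}$. The edges are: every vertex of $A_i\cup A'_i$ is joined to every $b_{ji}\in Bset_i$ with weight $\delta(a_i,b_j)$; every vertex of $W_j$ is joined to every vertex of $B_j$ with weight $0$; every vertex of $X_j$ is joined to every vertex of $B_j$ with weight $\gamma'$; every vertex of $X_j$ is joined to every vertex of $Y$ with weight $\gamma''$; every vertex of $A'_i$ is joined to every vertex of $Y$ with weight $\gamma'$. The weight of a set of edges is the sum of their weights. The main edges are the edges between $A_i\cup A'_i$ and $Bset_i$ ($1\le i\le s$); for a matching $M$ in $G$, $Main(M)$ denotes the set of main edges of $M$. *)

(* Defs.v *)
From HB Require Import structures.
From mathcomp Require Import all_boot all_order all_algebra.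
Set Implicit Arguments. Unset Strict Implicit. Unset Printing Implicit Defensive.
Import Order.TTheory GRing.Theory Num.Theory.
Local Open Scope ring_scope.

Section MMDC.
Variables (R : realFieldType) (s t : nat) (delta : 'I_s -> 'I_t -> R).
Variables (alpha alpha' : 'I_s -> nat) (beta beta' : 'I_t -> nat).

Definition deg_A (L : {set 'I_s * 'I_t}) (i : 'I_s) : nat :=
  #|[set e in L | e.1 == i]|.
Definition deg_B (L : {set 'I_s * 'I_t}) (j : 'I_t) : nat :=
  #|[set e in L | e.2 == j]|.

Definition is_MMDC (L : {set 'I_s * 'I_t}) : Prop :=
  (forall i, alpha i <= deg_A L i <= alpha' i)%N /\
  (forall j, beta j <= deg_B L j <= beta' j)%N.

Definition cost (L : {set 'I_s * 'I_t}) : R := \sum_(e in L) delta e.1 e.2.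

Definition is_min_MMDC (L : {set 'I_s * 'I_t}) : Prop :=
  is_MMDC L /\ forall L', is_MMDC L' -> cost L <= cost L'.

(* S = (A_i's + A'_i's) + (X_j's + W_j's) *)
Definition Svert : finType :=
  (({i : 'I_s & 'I_(alpha i)} + {i : 'I_s & 'I_(alpha' i - alpha i)}) +
   ({j : 'I_t & 'I_(beta' j - beta j)} + {j : 'I_t & 'I_(s - beta' j)}))%type.

(* T = { b_ji } + Y ; inl (j, i) is b_{ji} *)
Definition Tvert : finType :=
  (('I_t * 'I_s) + 'I_(\sum_i alpha' i - \sum_j beta j))%type.

Variables (gamma' gamma'' : R).

(* None = no edge; Some w = edge of weight w *)
Definition edgeG (u : Svert) (v : Tvert) : option R :=
  match u, v with
  | inl (inl (existT i _)), inl (j, i') => if i' == i then Some (delta i j) else None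
  | inl (inr (existT i _)), inl (j, i') => if i' == i then Some (delta i j) else None
  | inl (inr _), inr _ => Some gamma'
  | inr (inl (existT j _)), inl (j', _) => if j' == j then Some gamma' else None
  | inr (inl _), inr _ => Some gamma''
  | inr (inr (existT j _)), inl (j', _) => if j' == j then Some 0 else None
  | _, _ => None
  end.

Definition is_edge (e : Svert * Tvert) : bool := edgeG e.1 e.2 != None.
Definition wt (e : Svert * Tvert) : R := odflt 0 (edgeG e.1 e.2).

Definition Weight (M : {set Svert * Tvert}) : R := \sum_(e in M) wt e.

Definition is_perfect_matching (M : {set Svert * Tvert}) : Prop :=
  (forall e, e \in M -> is_edge e) /\
  (forall u : Svert, #|[set e in M | e.1 == u]| = 1%N) /\
  (forall v : Tvert, #|[set e in M | e.2 == v]| = 1%N).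

Definition is_min_perfect_matching (M : {set Svert * Tvert}) : Prop :=
  is_perfect_matching M /\
  forall M', is_perfect_matching M' -> Weight M <= Weight M'.

(* main edges: between A_i u A'_i and Bset_i *)
Definition isAvert (u : Svert) : bool := if u is inl _ then true else false.
Definition isBvert (v : Tvert) : bool := if v is inl _ then true else false.
Definition is_main (e : Svert * Tvert) : bool :=
  [&& isAvert e.1, isBvert e.2 & is_edge e].

Definition Main (M : {set Svert * Tvert}) : {set Svert * Tvert} :=
  [set e in M | is_main e].

End MMDC.

(* Main.v *)
Set Warnings "-notation-overridden,-ambiguous-paths,-notation-incompatible-prefix".
Require Import Defs.
From HB Require Import structures.
From mathcomp Require Import all_boot all_order all_algebra.
From mathcomp Require Import zify.
Set Implicit Arguments. Unset Strict Implicit. Unset Printing Implicit Defensive.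
Import Order.TTheory GRing.Theory Num.Theory.
Local Open Scope ring_scope.

Lemma card_tag (I : finType) (T_ : I -> finType) (i : I) :
  #|[set x : {k : I & T_ k} | tag x == i]| = #|T_ i|.
Proof.
have -> : [set x : {k : I & T_ k} | tag x == i] = (Tagged T_) @: [set: T_ i].
  apply/setP => x; rewrite inE; apply/idP/imsetP.
    by case: x => k y /= /eqP ?; subst i; exists y.
  by case=> y _ ->.
rewrite card_imset ?cardsT //; exact: eq_from_Tagged.
Qed.

Lemma card_inj_img (T U : finType) (f : T -> U) (A : {set T}) (P : {set U}) :
  injective f -> f @: A = P -> #|P| = #|A|.
Proof. by move=> fi <-; rewrite card_imset. Qed.

Section Pf.
Variables (R : realFieldType) (s t : nat) (delta : 'I_s -> 'I_t -> R).
Variables (alpha alpha' : 'I_s -> nat) (beta beta' : 'I_t -> nat) (gamma' gamma'' : R).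
Hypothesis halpha : forall i, (alpha i <= alpha' i)%N.
Hypothesis hbeta : forall j, (beta j <= beta' j <= s)%N.
Local Notation S := (Svert alpha alpha' beta beta').
Local Notation T := (Tvert alpha' beta).
Variable M : {set S * T}.
Hypothesis hM : is_perfect_matching delta gamma' gamma'' M.

Lemma fst_inj : {in M &, injective (fun e : S * T => e.1)}.
Proof.
case: hM => _ [h1 _] e e' eM e'M /= eq.
have := h1 e.1; move/eqP/cards1P => [x hx].
have : e \in [set z in M | z.1 == e.1] by rewrite inE eM eqxx.
have : e' \in [set z in M | z.1 == e.1] by rewrite inE e'M eq eqxx.
by rewrite hx !inE => /eqP -> /eqP ->.
Qed.

Lemma snd_inj : {in M &, injective (fun e : S * T => e.2)}.
Proof.
case: hM => _ [_ h1] e e' eM e'M /= eq.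
have := h1 e.2; move/eqP/cards1P => [x hx].
have : e \in [set z in M | z.2 == e.2] by rewrite inE eM eqxx.
have : e' \in [set z in M | z.2 == e.2] by rewrite inE e'M eq eqxx.
by rewrite hx !inE => /eqP -> /eqP ->.
Qed.

Lemma cardS1 (P : {set S}) : #|[set e in M | e.1 \in P]| = #|P|.
Proof.
case: hM => _ [h1 _].
rewrite -(card_in_imset (f := fun e : S * T => e.1)); last first.
  by move=> x y; rewrite !inE => /andP[xM _] /andP[yM _]; apply: fst_inj.
apply: eq_card => u; apply/imsetP/idP.
  by case=> e; rewrite inE => /andP[_ ?] ->.
move=> uP; have := h1 u; move/eqP/cards1P => [x hx].
have : x \in [set e in M | e.1 == u] by rewrite hx inE.
by rewrite inE => /andP[xM /eqP xu]; exists x; rewrite // inE xM xu.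
Qed.

Lemma cardS2 (P : {set T}) : #|[set e in M | e.2 \in P]| = #|P|.
Proof.
case: hM => _ [_ h1].
rewrite -(card_in_imset (f := fun e : S * T => e.2)); last first.
  by move=> x y; rewrite !inE => /andP[xM _] /andP[yM _]; apply: snd_inj.
apply: eq_card => u; apply/imsetP/idP.
  by case=> e; rewrite inE => /andP[_ ?] ->.
move=> uP; have := h1 u; move/eqP/cards1P => [x hx].
have : x \in [set e in M | e.2 == u] by rewrite hx inE.
by rewrite inE => /andP[xM /eqP xu]; exists x; rewrite // inE xM xu.
Qed.


Definition AA (i : 'I_s) : {set S} := [set u : S | match u with
  | inl (inl x) => tag x == i | inl (inr x) => tag x == i | _ => false end].
Definition A1 (i : 'I_s) : {set S} := [set u : S | match u with
  | inl (inl x) => tag x == i | _ => false end].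
Definition A2 (i : 'I_s) : {set S} := [set u : S | match u with
  | inl (inr x) => tag x == i | _ => false end].
Definition Xs (j : 'I_t) : {set S} := [set u : S | match u with
  | inr (inl x) => tag x == j | _ => false end].
Definition Ws (j : 'I_t) : {set S} := [set u : S | match u with
  | inr (inr x) => tag x == j | _ => false end].
Definition Bj (j : 'I_t) : {set T} := [set v : T | match v with
  | inl p => p.1 == j | _ => false end].
Definition Bi (i : 'I_s) : {set T} := [set v : T | match v with
  | inl p => p.2 == i | _ => false end].

Lemma card_tag_img (I : finType) (T_ : I -> finType) (U : finType)
  (f : {k : I & T_ k} -> U) (P : {set U}) (i : I) :
  injective f -> (forall u, u \in P = [exists x, (tag x == i) && (u == f x)]) ->
  #|P| = #|T_ i|.
Proof.
move=> fi hP; rewrite -card_tag; apply: card_inj_img fi _.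
apply/setP => u; rewrite hP; apply/imsetP/existsP.
  by case=> x; rewrite inE => ? ->; exists x; rewrite eqxx andbT.
by case=> x /andP[h /eqP ->]; exists x; rewrite ?inE.
Qed.

Lemma card_A1 i : #|A1 i| = alpha i.
Proof.
rewrite -[RHS]card_ord; apply: (card_tag_img (f := fun x => inl (inl x))).
  by move=> x y [].
move=> u; rewrite inE; apply/idP/existsP.
- by case: u => [[x|x]|[x|x]] // h; exists x; rewrite h eqxx.
- by case=> y /andP[h /eqP ->].
Qed.

Lemma card_A2 i : #|A2 i| = (alpha' i - alpha i)%N.
Proof.
rewrite -[RHS]card_ord; apply: (card_tag_img (f := fun x => inl (inr x))).
  by move=> x y [].
move=> u; rewrite inE; apply/idP/existsP.
- by case: u => [[x|x]|[x|x]] // h; exists x; rewrite h eqxx.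
- by case=> y /andP[h /eqP ->].
Qed.

Lemma card_Xs j : #|Xs j| = (beta' j - beta j)%N.
Proof.
rewrite -[RHS]card_ord; apply: (card_tag_img (f := fun x => inr (inl x))).
  by move=> x y [].
move=> u; rewrite inE; apply/idP/existsP.
- by case: u => [[x|x]|[x|x]] // h; exists x; rewrite h eqxx.
- by case=> y /andP[h /eqP ->].
Qed.

Lemma card_Ws j : #|Ws j| = (s - beta' j)%N.
Proof.
rewrite -[RHS]card_ord; apply: (card_tag_img (f := fun x => inr (inr x))).
  by move=> x y [].
move=> u; rewrite inE; apply/idP/existsP.
- by case: u => [[x|x]|[x|x]] // h; exists x; rewrite h eqxx.
- by case=> y /andP[h /eqP ->].
Qed.

Lemma card_AA i : #|AA i| = alpha' i.
Proof.
have -> : AA i = A1 i :|: A2 i.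
  by apply/setP => u; rewrite /AA /A1 /A2 !inE; case: u => [[x|x]|[x|x]]; rewrite ?orbF.
rewrite cardsU.
have -> : A1 i :&: A2 i = set0.
  by apply/setP => u; rewrite /A1 /A2 !inE; case: u => [[x|x]|[x|x]]; rewrite ?andbF.
rewrite cards0 card_A1 card_A2; have := halpha i; lia.
Qed.

Lemma card_Bj j : #|Bj j| = s.
Proof.
have inj : injective (fun k : 'I_s => (inl (j, k) : T)) by move=> x y [].
transitivity #|[set: 'I_s]|; last by rewrite cardsT card_ord.
rewrite -(card_imset _ inj).
apply: eq_card => v; rewrite /Bj [v \in [set _ | _]]inE; apply/idP/imsetP.
  by case: v => // -[j0 k] /= /eqP ->; exists k; rewrite ?inE.
by case=> k _ ->.
Qed.


Local Notation MainM := (Main delta gamma' gamma'' M).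
Definition g (p : 'I_s * 'I_t) : T := inl (p.2, p.1).
Definition LM : {set 'I_s * 'I_t} := [set p | g p \in (fun e : S * T => e.2) @: MainM].

Lemma g_inj : injective g.
Proof. by case=> [a b] [c d] [-> ->]. Qed.

Lemma edgeM e : e \in M -> is_edge delta gamma' gamma'' e.
Proof. by case: hM => h _; apply: h. Qed.

Lemma main_char e : e \in MainM ->
  e \in M /\ exists p, [/\ e.2 = g p, e.1 \in AA p.1 & wt delta gamma' gamma'' e = delta p.1 p.2].
Proof.
rewrite inE => /andP[eM hm]; split => //; move: hm; clear eM.
case: e => [[[[i0 k]|[i0 k]]|[[j0 k]|[j0 k]]] [[j1 i1]|y]];
  rewrite /is_main /is_edge /wt /AA /= ?andbF //=;
  case: (i1 =P i0) => [?|] // _; subst i1; exists (i0, j1); split => //=; rewrite ?inE /= ?eqxx //.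
Qed.


Lemma snd_injM : {in MainM &, injective (fun e : S * T => e.2)}.
Proof.
move=> x y; rewrite !inE => /andP[xM _] /andP[yM _]; exact: snd_inj.
Qed.

Lemma LM_img (Q : pred T) :
  g @: [set p in LM | Q (g p)] = (fun e : S * T => e.2) @: [set e in MainM | Q e.2].
Proof.
apply/setP => v; apply/imsetP/imsetP.
  case=> p; rewrite !inE => /andP[/imsetP[e eMain ge] Qg] ->.
  by exists e; rewrite // inE eMain -ge.
case=> e; rewrite inE => /andP[eMain Qe] ->.
have [_ [p [e2 _ _]]] := main_char eMain.
exists p; rewrite // !inE -e2 Qe andbT.
by apply/imsetP; exists e.
Qed.

Lemma card_LM (Q : pred T) :
  #|[set p in LM | Q (g p)]| = #|[set e in MainM | Q e.2]|.
Proof.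
rewrite -(card_imset _ g_inj) LM_img card_in_imset //.
by move=> x y /setIdP[xM _] /setIdP[yM _]; apply: snd_injM.
Qed.

Definition hT (v : T) : R := if v is inl (j, i) then delta i j else 0.

Lemma weight_LM : Weight delta gamma' gamma'' MainM = cost delta LM.
Proof.
rewrite /Weight /cost.
transitivity (\sum_(e in MainM) hT e.2).
  apply: eq_bigr => e eMain.
  by have [_ [p [-> _ ->]]] := main_char eMain; case: p.
rewrite -big_imset; last exact: snd_injM.
have := LM_img predT.
have -> : [set p in LM | predT (g p)] = LM by apply/setP => p; rewrite !inE andbT.
have -> : [set e in MainM | predT e.2] = MainM by apply/setP => p; rewrite !inE andbT.
move=> <-; rewrite big_imset; last by move=> x y _ _; apply: g_inj.
by apply: eq_bigr => -[i j].
Qed.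


Lemma A1_sub i : [set e in M | e.1 \in A1 i] \subset [set e in MainM | e.2 \in Bi i].
Proof.
apply/subsetP => e /setIdP[eM eA]; have ed := edgeM eM; rewrite !inE eM /=.
move: eA ed {eM}.
case: e => [[[[i0 k]|[i0 k]]|[[j0 k]|[j0 k]]] [[j1 i1]|y]];
  rewrite /A1 /is_main /is_edge /Bi /= ?inE //=.
by move=> /eqP ?; subst i0; case: (i1 =P i) => [?|] //; subst i1; rewrite eqxx.
Qed.


Lemma main_sub i : [set e in MainM | e.2 \in Bi i] \subset [set e in M | e.1 \in AA i].
Proof.
apply/subsetP => e /setIdP[eMain eB].
have [eM [p [e2 eA _]]] := main_char eMain.
move: eB; rewrite e2 /Bi inE /= => /eqP pi.
by rewrite inE eM -pi.
Qed.

Lemma degA i : (alpha i <= deg_A LM i <= alpha' i)%N.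
Proof.
have -> : deg_A LM i = #|[set p in LM | (fun v => v \in Bi i) (g p)]|.
  by apply: eq_card => p; rewrite !inE.
rewrite card_LM; apply/andP; split.
  by rewrite -card_A1 -cardS1; apply: subset_leq_card; apply: A1_sub.
by rewrite -card_AA -cardS1; apply: subset_leq_card; apply: main_sub.
Qed.


Lemma W_eq j : ([set e in M | e.2 \in Bj j] :\: [set e | is_main delta gamma' gamma'' e]) :&: [set e | e.1 \in Ws j]
  = [set e in M | e.1 \in Ws j].
Proof.
apply/setP => e; rewrite !inE.
case eM: (e \in M); rewrite ?andbF //=.
have := edgeM eM; clear eM.
case: e => [[[[i0 k]|[i0 k]]|[[j0 k]|[j0 k]]] [[j1 i1]|y]];
  rewrite /Ws /Bj /is_main /is_edge /= ?inE ?andbF //=.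
by case: (j1 =P j0) => [->|] //; rewrite andbb.
Qed.


Lemma X_sub j : ([set e in M | e.2 \in Bj j] :\: [set e | is_main delta gamma' gamma'' e]) :\: [set e | e.1 \in Ws j]
  \subset [set e in M | e.1 \in Xs j].
Proof.
apply/subsetP => e; rewrite !inE.
case eM: (e \in M); rewrite ?andbF //=.
have := edgeM eM; clear eM.
case: e => [[[[i0 k]|[i0 k]]|[[j0 k]|[j0 k]]] [[j1 i1]|y]];
  rewrite /Xs /Ws /Bj /is_main /is_edge /= ?inE ?andbF //=.
all: try by move=> ->.
all: case: (j1 =P j0) => [->|] //.
by move=> _ /andP[/negPf ->].
Qed.


Lemma degB j : (beta j <= deg_B LM j <= beta' j)%N.
Proof.
have -> : deg_B LM j = #|[set p in LM | (fun v => v \in Bj j) (g p)]|.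
  by apply: eq_card => p; rewrite !inE.
rewrite card_LM.

have hF : #|[set e in M | e.2 \in Bj j]| = s by rewrite cardS2 card_Bj.
have h1 := cardsID [set e | is_main delta gamma' gamma'' e] [set e in M | e.2 \in Bj j].
have h2 := cardsID [set e : S * T | e.1 \in Ws j] ([set e in M | e.2 \in Bj j] :\: [set e | is_main delta gamma' gamma'' e]).
have e1 : [set e in M | e.2 \in Bj j] :&: [set e | is_main delta gamma' gamma'' e] = [set e in MainM | e.2 \in Bj j].
  apply/setP => e; rewrite /Main !inE /is_main; case: (e \in M); case: (isAvert e.1); case: (isBvert e.2); case: (is_edge delta gamma' gamma'' e); rewrite /= ?andbF ?andbT //.
rewrite e1 in h1. rewrite W_eq in h2. rewrite cardS1 in h2. rewrite card_Ws in h2.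
have h3 := subset_leq_card (X_sub j); rewrite cardS1 card_Xs in h3.
have hb := hbeta j.
have e2 : #|[set e in MainM | (fun v => v \in Bj j) e.2]| = #|[set e in MainM | e.2 \in Bj j]| by [].
rewrite e2. move: h1 h2 h3 hF hb. set x := #|[set e in MainM | _]|. set y := #|_ :\: [set e | e.1 \in Ws j]|. set z := #|[set e in M | e.2 \in Bj j] :\: _|. set w := #|[set e in M | _]|. clearbody x y z w; lia.
Qed.

Lemma LM_MMDC : is_MMDC alpha alpha' beta beta' LM.
Proof. split; [exact: degA | exact: degB]. Qed.

End Pf.

Theorem lemma4 (R : realFieldType) (s t : nat) (delta : 'I_s -> 'I_t -> R)
    (alpha alpha' : 'I_s -> nat) (beta beta' : 'I_t -> nat) (gamma' gamma'' : R)
    (halpha : forall i, (alpha i <= alpha' i)%N)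
    (hbeta : forall j, (beta j <= beta' j <= s)%N)
    (hsum : (\sum_j beta j < \sum_i alpha' i)%N)
    (hgamma' : forall i j, delta i j < gamma')
    (hgamma'' : gamma' < gamma'')
    (M : {set Svert alpha alpha' beta beta' * Tvert alpha' beta})
    (L : {set 'I_s * 'I_t})
    (hM : is_min_perfect_matching delta gamma' gamma'' M)
    (hL : is_min_MMDC delta alpha alpha' beta beta' L) :
  cost delta L <= Weight delta gamma' gamma'' (Main delta gamma' gamma'' M).
Proof.
case: hM => hPM _; case: hL => _ hmin.
rewrite weight_LM //; apply: hmin; exact: LM_MMDC.
Qed.
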